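(* Let $\Gamma_3^*\subseteq\mathbb{R}^7$ be the set of entropy vectors of triples of discrete random variables. Let $\mathbf{e}_1=[1,0,0,1,1,0,1]^\intercal$, $\mathbf{e}_2=[0,1,0,1,0,1,1]^\intercal$, $\mathbf{e}_3=[0,0,1,0,1,1,1]^\intercal$, $\mathbf{e}_{123'}=[1,1,1,2,2,2,2]^\intercal$, and $\Theta=\mathrm{cone}(\mathbf{e}_1,\mathbf{e}_2,\mathbf{e}_3,\mathbf{e}_{123'})$. Let $\Theta^{\mathrm{in}}$ be the set of all vectors $\lambda_1\mathbf{e}_1+\lambda_2\mathbf{e}_2+\lambda_3\mathbf{e}_3+\lambda_{123'}\mathbf{e}_{123'}$ with $\lambda_1,\lambda_2,\lambda_3\ge 0$ and $\lambda_{123'}=\log m$ for some $m\in\mathbb{N}$. Then $\Theta^{\mathrm{in}}\subseteq\Theta\cap\Gamma_3^*$.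
   Context: All logarithms are base 2 and entropies are in bits. For a discrete random vector $(X_1,X_2,X_3)$, its entropy vector is $[h_1,h_2,h_3,h_{12},h_{13},h_{23},h_{123}]^\intercal\in\mathbb{R}^7$, where $h_\alpha$ is the Shannon entropy of $(X_i)_{i\in\alpha}$. *)

(* Defs.v *)
From HB Require Import structures.
From mathcomp Require Import all_boot all_order all_algebra.
From mathcomp Require Import all_classical all_reals.
From mathcomp Require Import exp.
Set Implicit Arguments. Unset Strict Implicit. Unset Printing Implicit Defensive.
Import Order.TTheory GRing.Theory Num.Theory.
Local Open Scope ring_scope.
Local Open Scope classical_set_scope.

Section Entropy.
Variable R : realType.

Definition log2 (x : R) : R := ln x / ln 2.

Definition is_pmf (T : finType) (p : {ffun T -> R}) : Prop :=
  (forall x, 0 <= p x) /\ \sum_(x : T) p x = 1.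

Definition pushpmf (T U : finType) (p : {ffun T -> R}) (f : T -> U) : {ffun U -> R} :=
  [ffun u => \sum_(x : T | f x == u) p x].

Definition entropy (U : finType) (q : {ffun U -> R}) : R :=
  - \sum_(u : U) (if q u == 0 then 0 else q u * log2 (q u)).

Definition Hf (T U : finType) (p : {ffun T -> R}) (f : T -> U) : R :=
  entropy (pushpmf p f).

(* entropy vector [h1,h2,h3,h12,h13,h23,h123] of (X1,X2,X3) with joint pmf p *)
Definition entvec (T1 T2 T3 : finType) (p : {ffun (T1 * T2 * T3)%type -> R})
  : 'rV[R]_7 :=
  \row_(i < 7) nth 0
    [:: Hf p (fun x => x.1.1);
        Hf p (fun x => x.1.2);
        Hf p (fun x => x.2);
        Hf p (fun x => (x.1.1, x.1.2));
        Hf p (fun x => (x.1.1, x.2));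
        Hf p (fun x => (x.1.2, x.2));
        Hf p (fun x => x)] i.

(* Gamma_3^* : entropy vectors of triples of (finitely supported) discrete r.v.s *)
Definition Gamma3star : set 'rV[R]_7 :=
  [set h | exists (T1 T2 T3 : finType) (p : {ffun (T1 * T2 * T3)%type -> R}),
           is_pmf p /\ h = entvec p].

Definition vec7 (a b c d e f g : R) : 'rV[R]_7 :=
  \row_(i < 7) nth 0 [:: a; b; c; d; e; f; g] i.

Definition e1 : 'rV[R]_7 := vec7 1 0 0 1 1 0 1.
Definition e2 : 'rV[R]_7 := vec7 0 1 0 1 0 1 1.
Definition e3 : 'rV[R]_7 := vec7 0 0 1 0 1 1 1.
Definition e123' : 'rV[R]_7 := vec7 1 1 1 2 2 2 2.

Definition Theta : set 'rV[R]_7 :=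
  [set v | exists a1 a2 a3 a4 : R, [/\ 0 <= a1, 0 <= a2, 0 <= a3, 0 <= a4 &
     v = a1 *: e1 + a2 *: e2 + a3 *: e3 + a4 *: e123']].

Definition Theta_in : set 'rV[R]_7 :=
  [set v | exists (l1 l2 l3 : R) (m : nat), [/\ 0 <= l1, 0 <= l2, 0 <= l3, (0 < m)%N &
     v = l1 *: e1 + l2 *: e2 + l3 *: e3 + log2 m%:R *: e123']].

End Entropy.

(* Main.v *)
Require Import Defs.
From mathcomp Require Import all_boot all_order all_algebra.
From mathcomp Require Import all_classical all_reals exp.
From mathcomp Require Import ring lra.
From mathcomp Require Import topology normedtype.
Import numFieldNormedType.Exports.
Set Implicit Arguments. Unset Strict Implicit. Unset Printing Implicit Defensive.
Import Order.TTheory GRing.Theory Num.Theory.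
Local Open Scope ring_scope.
Local Open Scope classical_set_scope.

Section Ent.
Variable R : realType.
Implicit Types (T U V : finType).

Definition prodp T U (pa : {ffun T -> R}) (pb : {ffun U -> R}) : {ffun (T * U)%type -> R} :=
  [ffun x => pa x.1 * pb x.2].

Definition phi (x : R) : R := if x == 0 then 0 else x * log2 x.

Lemma entropyE U (q : {ffun U -> R}) : entropy q = - \sum_u phi (q u).
Proof. by []. Qed.

Lemma phiM x y : 0 <= x -> 0 <= y -> phi (x * y) = x * phi y + y * phi x.
Proof.
rewrite /phi le0r => /orP[/eqP->|x0]; first by rewrite mul0r eqxx mul0r mulr0 addr0.
rewrite le0r => /orP[/eqP->|y0]; first by rewrite mulr0 eqxx mul0r mulr0 add0r.
rewrite mulf_eq0 !gt_eqF //= /log2 lnM ?posrE //.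
by rewrite mulrDl mulrDr; ring.
Qed.

Lemma push_comp T U V (p : {ffun T -> R}) (f : T -> U) (h : U -> V) :
  pushpmf p (h \o f) = pushpmf (pushpmf p f) h.
Proof.
apply/ffunP => v; rewrite !ffunE.
rewrite (partition_big f (fun u => h u == v)) //=.
apply: eq_bigr => u huv; rewrite ffunE; apply: eq_bigl => x.
by case: (f x =P u) => [->|]; rewrite ?andbT ?andbF // huv.
Qed.

Lemma sum_pred_le1 U (P : pred U) (F : U -> R) :
  (forall a b, P a -> P b -> a = b) -> phi (\sum_(u | P u) F u) = \sum_(u | P u) phi (F u).
Proof.
move=> H; case: (pickP P) => [a Pa|P0].
  rewrite !(big_pred1 a) // => u /=; apply/idP/eqP => [Pu|->//]; exact: H.
by rewrite !big_pred0 // /phi eqxx.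
Qed.

Lemma entropy_push_inj U V (q : {ffun U -> R}) (h : U -> V) :
  injective h -> entropy (pushpmf q h) = entropy q.
Proof.
move=> hi; rewrite !entropyE; congr (- _).
rewrite (partition_big h xpredT) //=.
apply: eq_bigr => v _; rewrite ffunE sum_pred_le1 //.
by move=> a b /eqP <- /eqP /hi.
Qed.

Lemma Hf_inj T U V (p : {ffun T -> R}) (f : T -> U) (h : U -> V) (f' : T -> V) :
  injective h -> (forall x, f' x = h (f x)) -> Hf p f' = Hf p f.
Proof.
move=> hi ef; rewrite /Hf.
have -> : f' = h \o f by apply: funext => x; rewrite ef.
by rewrite push_comp entropy_push_inj.
Qed.

Lemma Hf_inj_full T U (p : {ffun T -> R}) (f : T -> U) :
  injective f -> Hf p f = entropy p.
Proof.
move=> fi; rewrite /Hf entropy_push_inj //.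
Qed.

Lemma Hf_push T U V (p : {ffun T -> R}) (g : T -> U) (f : U -> V) :
  Hf (pushpmf p g) f = Hf p (f \o g).
Proof. by rewrite /Hf push_comp. Qed.

Lemma pmf_push T U (p : {ffun T -> R}) (f : T -> U) : is_pmf p -> is_pmf (pushpmf p f).
Proof.
move=> [p0 p1]; split=> [u|]; first by rewrite ffunE sumr_ge0.
rewrite -p1 (partition_big f xpredT) //=.
by apply: eq_bigr => u _; rewrite ffunE.
Qed.

Lemma pmf_prod T U (pa : {ffun T -> R}) (pb : {ffun U -> R}) :
  is_pmf pa -> is_pmf pb -> is_pmf (prodp pa pb).
Proof.
move=> [a0 a1] [b0 b1]; split=> [x|]; first by rewrite ffunE mulr_ge0.
rewrite (eq_bigr (fun x => pa x.1 * pb x.2)); last by move=> x _; rewrite ffunE.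
rewrite -(pair_bigA _ (fun a b => pa a * pb b)) /=.
under eq_bigr => a _ do rewrite -mulr_sumr b1 mulr1.
exact: a1.
Qed.

Lemma entropy_prod T U (pa : {ffun T -> R}) (pb : {ffun U -> R}) :
  is_pmf pa -> is_pmf pb -> entropy (prodp pa pb) = entropy pa + entropy pb.
Proof.
move=> [a0 a1] [b0 b1]; rewrite !entropyE.
rewrite (eq_bigr (fun x => pa x.1 * phi (pb x.2) + pb x.2 * phi (pa x.1))); last first.
  by move=> x _; rewrite ffunE phiM.
rewrite -(pair_bigA _ (fun a b => pa a * phi (pb b) + pb b * phi (pa a))) /=.
under eq_bigr => a _ do rewrite big_split /= -mulr_sumr -mulr_suml b1 mul1r.
rewrite big_split /= -mulr_suml a1 mul1r; ring.
Qed.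

Lemma push_prod T U V (W : finType) (pa : {ffun T -> R}) (pb : {ffun U -> R})
   (fa : T -> V) (fb : U -> W) :
  pushpmf (prodp pa pb) (fun x => (fa x.1, fb x.2)) =
  prodp (pushpmf pa fa) (pushpmf pb fb).
Proof.
apply/ffunP => [[v w]]; rewrite !ffunE /=.
transitivity (\sum_(a | fa a == v) \sum_(b | fb b == w) pa a * pb b).
  rewrite pair_big_dep /=; apply: eq_big => [[a b]|[a b] _] /=.
    by rewrite xpair_eqE.
  by rewrite ffunE.
rewrite mulr_suml; apply: eq_bigr => a _; rewrite mulr_sumr.
by apply: eq_bigr => b _.
Qed.


Lemma Hf_ext T U (p : {ffun T -> R}) (f f' : T -> U) :
  (forall x, f x = f' x) -> Hf p f = Hf p f'.
Proof. by move=> e; have -> : f = f' by apply: funext. Qed.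

Lemma Hf_prod T U V (W : finType) (pa : {ffun T -> R}) (pb : {ffun U -> R})
   (fa : T -> V) (fb : U -> W) : is_pmf pa -> is_pmf pb ->
  Hf (prodp pa pb) (fun x => (fa x.1, fb x.2)) = Hf pa fa + Hf pb fb.
Proof.
by move=> ha hb; rewrite /Hf push_prod entropy_prod //; apply: pmf_push.
Qed.

Lemma Hf_const T (p : {ffun T -> R}) : is_pmf p -> Hf p (fun _ => tt) = 0.
Proof.
move=> [_ p1]; rewrite /Hf entropyE (big_pred1 tt); last by case.
rewrite ffunE.
rewrite (eq_bigl xpredT) ?p1; last by move=> x.

by rewrite /phi oner_eq0 mul1r /log2 ln1 mul0r oppr0.
Qed.

Lemma Hf_fst T U V (pa : {ffun T -> R}) (pb : {ffun U -> R}) (fa : T -> V) :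
  is_pmf pa -> is_pmf pb -> Hf (prodp pa pb) (fun x => fa x.1) = Hf pa fa.
Proof.
move=> ha hb.
rewrite (@Hf_inj _ _ _ _ (fun x => (fa x.1, tt)) (fun y => y.1)).
- by rewrite (@Hf_prod _ _ _ _ pa pb fa (fun _ => tt)) // Hf_const // addr0.
- by move=> [a []] [b []] /= ->.
- by [].
Qed.

Lemma Hf_snd T U V (pa : {ffun T -> R}) (pb : {ffun U -> R}) (fb : U -> V) :
  is_pmf pa -> is_pmf pb -> Hf (prodp pa pb) (fun x => fb x.2) = Hf pb fb.
Proof.
move=> ha hb.
rewrite (@Hf_inj _ _ _ _ (fun x => (tt, fb x.2)) (fun y => y.2)).
- by rewrite (@Hf_prod _ _ _ _ pa pb (fun _ => tt) fb) // Hf_const // add0r.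
- by move=> [[] a] [[] b] /= ->.
- by [].
Qed.

Lemma Hf_bij T U (p : {ffun T -> R}) (f : T -> U) (tau : T -> T) :
  bijective tau -> (forall x, p (tau x) = p x) -> Hf p f = Hf p (f \o tau).
Proof.
move=> bt pt; rewrite /Hf; congr entropy; apply/ffunP => u; rewrite !ffunE.
rewrite (reindex tau) /=; last by apply: onW_bij.
by apply: eq_bigr => x _; rewrite pt.
Qed.

Definition unif T : {ffun T -> R} := [ffun _ => (#|T|%:R)^-1].

Lemma pmf_unif T : (0 < #|T|)%N -> is_pmf (unif T).
Proof.
move=> h; split=> [x|]; first by rewrite ffunE invr_ge0 ler0n.
under eq_bigr do rewrite ffunE.
rewrite sumr_const.
have -> : #|(xpredT : pred T)| = #|T| by apply: eq_card.
by rewrite -(mulr_natl (#|T|%:R^-1)) mulfV // pnatr_eq0 -lt0n.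
Qed.

Lemma entropy_unif T : (0 < #|T|)%N -> entropy (unif T) = log2 (#|T|%:R).
Proof.
move=> h; rewrite entropyE.
have n0 : (#|T|%:R : R) != 0 by rewrite pnatr_eq0 -lt0n.
have np : (0 : R) < #|T|%:R by rewrite ltr0n.
under eq_bigr do rewrite ffunE /phi invr_eq0 (negbTE n0).
rewrite sumr_const /log2 lnV ?posrE //.
have -> : #|(xpredT : pred T)| = #|T| by apply: eq_card.
rewrite -(mulr_natl (#|T|%:R^-1 * _)) mulrA mulfV //; ring.
Qed.


Definition hb (t : R) := - (phi t + phi (1 - t)).
Definition bern (t : R) : {ffun bool -> R} := [ffun b => if b then t else 1 - t].

Lemma pmf_bern t : 0 <= t <= 1 -> is_pmf (bern t).
Proof.
move=> /andP[t0 t1]; split=> [b|]; first by rewrite ffunE; case: b; lra.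
by rewrite big_bool /= !ffunE; ring.
Qed.

Lemma entropy_bern t : entropy (bern t) = hb t.
Proof. by rewrite entropyE big_bool /= !ffunE. Qed.

Lemma ln_le_sub1 (x : R) : 0 < x -> ln x <= x - 1.
Proof. move=> x0; have := expR_ge1Dx (ln x); rewrite lnK ?posrE //; lra. Qed.

Lemma xlnx_ge (x : R) : 0 < x -> x - 1 <= x * ln x.
Proof.
move=> x0; have := @ln_le_sub1 x^-1 (ltac:(by rewrite invr_gt0)); have := x0.
rewrite lnV ?posrE // => _ h.
have e : x * x^-1 = 1 by rewrite mulfV // gt_eqF.
nra.
Qed.

Lemma ln2_gt0 : 0 < ln (2 : R).
Proof. by apply: ln_gt0; lra. Qed.

Lemma ln2_le1 : ln (2 : R) <= 1.
Proof. have := ln_le_sub1 (ltr0Sn R 1); lra. Qed.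

Lemma hbE t : 0 < t < 1 -> hb t = - (t * ln t + (1 - t) * ln (1 - t)) / ln 2.
Proof.
move=> /andP[t0 t1]; rewrite /hb /phi gt_eqF // (_ : (1 - t == 0) = false); last first.
  by apply/negbTE; rewrite subr_eq0 eq_sym lt_eqF.
rewrite /log2; field; exact: lt0r_neq0 ln2_gt0.
Qed.

Lemma g_cont (x : R) (xp : 0 < x) (x1p : 0 < 1 - x) :
  {for x, continuous (fun t : R => - (t * ln t + (1 - t) * ln (1 - t)) / ln 2)}.
Proof.
have c1 : (fun t : R => 1 - t) @ x --> 1 - x.
  by apply: cvgB; [exact: cvg_cst|exact: cvg_id].
have c2 : (fun t : R => ln (1 - t)) @ x --> ln (1 - x).
  exact: (cvg_comp _ _ c1 (continuous_ln x1p)).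
have c3 : (fun t : R => t * ln t) @ x --> x * ln x.
  exact: (cvgM cvg_id (continuous_ln xp)).
have c4 : (fun t : R => (1 - t) * ln (1 - t)) @ x --> (1 - x) * ln (1 - x).
  exact: (cvgM c1 c2).
have c5 := cvgN (cvgD c3 c4).
by apply: cvgM; [exact: c5|exact: cvg_cst].
Qed.

Lemma exists_hb (f : R) : 0 <= f < 1 -> exists t, 0 <= t <= 1 /\ hb t = f.
Proof.
move=> /andP[f0 f1]; have [->|fp] := eqVneq f 0.
  exists 0; split; first lra.
  by rewrite /hb /phi eqxx subr0 oner_eq0 mul1r /log2 ln1 mul0r; ring.
have fpos : 0 < f by rewrite lt0r fp.
have l2 := ln2_gt0; have l21 := ln2_le1.
set s := f * ln 2 / 4.
have s0 : 0 < s by rewrite /s; apply: divr_gt0; [exact: mulr_gt0|lra].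
have s1 : s <= 1 / 4.
  rewrite /s ler_pdivrMr; last lra.
  by rewrite mul1r; nra.
set t0 := s * s.
have t00 : 0 < t0 by exact: mulr_gt0.
have t01 : t0 <= 1 / 16 by rewrite /t0; nra.
set g := fun t : R => - (t * ln t + (1 - t) * ln (1 - t)) / ln 2.
have gt0 : g t0 <= 3 * f / 4.
  rewrite /g ler_pdivrMr //.
  have h1 := xlnx_ge s0.
  have h2 := xlnx_ge (_ : 0 < 1 - t0); have {h2}h2 : 1 - t0 - 1 <= (1 - t0) * ln (1 - t0) by apply: h2; lra.
  have e : ln t0 = 2 * ln s by rewrite /t0 lnM ?posrE //; ring.
  rewrite e.
  have : 4 * s = f * ln 2 by rewrite /s; field.
  have et : t0 = s * s by [].
  move: h2; rewrite et => h2 h4.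
  have h3 : s * (s * ln s) >= s * (s - 1) by rewrite ler_pM2l.
  nra.
have g12 : g (1 / 2) = 1.
  rewrite /g (_ : 1 - 1 / 2 = 1 / 2 :> R); last by field.
  rewrite (_ : 1 / 2 = (2 : R)^-1); last by field.
  rewrite lnV ?posrE //.
  by field; rewrite gt_eqF.
have := @IVT R g t0 (1 / 2) f _ _ _.
case.
- lra.
- apply: continuous_in_subspaceT => x; rewrite inE /= in_itv /= => /andP[x0 x1].
  by apply: g_cont; lra.
- rewrite g12; apply/andP; split.
    by rewrite ge_min; apply/orP; left; lra.
  by rewrite le_max; apply/orP; right; lra.
- move=> c; rewrite in_itv /= => /andP[c0 c1] gc.
  exists c; split; first lra.
  rewrite hbE //; lra.
Qed.

Lemma exists_ent (l : R) : 0 <= l ->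
  exists (A : finType) (q : {ffun A -> R}), is_pmf q /\ entropy q = l.
Proof.
move=> l0; have /andP[k1 k2] := truncn_itv l0; set k := Num.truncn l in k1 k2.
have [t [t01 ht]] := @exists_hb (l - k%:R) (ltac:(apply/andP; split; lra)).
exists ('I_(2^k) * bool)%type, (prodp (unif 'I_(2^k)) (bern t)).
have hu : is_pmf (unif 'I_(2^k)) by apply: pmf_unif; rewrite card_ord expn_gt0.
have hb' := pmf_bern t01.
split; first exact: pmf_prod.
rewrite entropy_prod // entropy_unif ?card_ord ?expn_gt0 // entropy_bern ht.
rewrite /log2 natrX lnXn; last lra.
rewrite -[ln 2 *+ k]mulr_natr.
rewrite -mulr_natr mulrAC divff ?mul1r; first ring.
by rewrite gt_eqF // ln2_gt0.
Qed.

End Ent.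

Theorem corollary1 (R : realType) :
  @Theta_in R `<=` @Theta R `&` @Gamma3star R.
Proof.
move=> v [l1 [l2 [l3 [m [l10 l20 l30 m0 ->]]]]].
have L0 : 0 <= log2 (m%:R : R).
  by rewrite /log2 divr_ge0 ?ln_ge0 ?ler1n // ltW // ln2_gt0.
split; first by exists l1, l2, l3, (log2 m%:R).
case: m m0 L0 => // n _ L0.
have [A1 [q1 [hq1 Hq1]]] := exists_ent l10.
have [A2 [q2 [hq2 Hq2]]] := exists_ent l20.
have [A3 [q3 [hq3 Hq3]]] := exists_ent l30.
pose I := 'I_n.+1.
pose Uq := unif R I.
have hU : is_pmf Uq by apply: pmf_unif; rewrite card_ord.
have HU : entropy Uq = log2 n.+1%:R by rewrite /Uq entropy_unif card_ord.
set L := log2 n.+1%:R in HU *.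
pose PA := prodp (prodp q1 q2) q3.
pose PU := prodp Uq Uq.
pose P := prodp PA PU.
have hq12 : is_pmf (prodp q1 q2) by apply: pmf_prod.
have hPA : is_pmf PA by apply: pmf_prod.
have hPU : is_pmf PU by apply: pmf_prod.
have hP : is_pmf P by apply: pmf_prod.
pose g := fun s : (A1 * A2 * A3) * (I * I) =>
  ((s.1.1.1, s.2.1), (s.1.1.2, s.2.2), (s.1.2, s.2.1 + s.2.2)).
pose p := pushpmf P g.
exists (A1 * I)%type, (A2 * I)%type, (A3 * I)%type, p.
split; first exact: pmf_push.
have idI : forall (T : finType), injective (fun x : T => x) by move=> T ? ?.
have HU1 : Hf PU (fun u => u.1) = L.
  by rewrite (Hf_fst (fun x => x)) // Hf_inj_full.
have HU2 : Hf PU (fun u => u.2) = L.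
  by rewrite (Hf_snd (fun x => x)) // Hf_inj_full.
have HU12 : Hf PU (fun u => (u.1, u.2)) = L + L.
  by rewrite Hf_inj_full ?entropy_prod ?HU // => [[a b] [c d]] /= [-> ->].
have HU3 : Hf PU (fun u => u.1 + u.2) = L.
  rewrite (Hf_bij _ (tau := fun u : I * I => (u.1, u.2 - u.1))).
  - rewrite -HU2; apply: Hf_ext => -[a b] /=; by rewrite addrC subrK.
  - by exists (fun u : I * I => (u.1, u.2 + u.1)) => -[a b] /=; rewrite ?subrK ?addrK.
  - by move=> [a b]; rewrite !ffunE.
have HU13 : Hf PU (fun u => (u.1, u.1 + u.2)) = L + L.
  rewrite Hf_inj_full ?entropy_prod ?HU // => [[a b] [c d]] /= e.
  have /= ea := congr1 fst e; have /= eb := congr1 snd e.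
  by rewrite ea in eb *; move/addrI: eb => ->.
have HU23 : Hf PU (fun u => (u.2, u.1 + u.2)) = L + L.
  rewrite Hf_inj_full ?entropy_prod ?HU // => [[a b] [c d]] /= e.
  have /= ea := congr1 fst e; have /= eb := congr1 snd e.
  by rewrite ea in eb *; move/addIr: eb => ->.
have HA1 : Hf PA (fun a => a.1.1) = l1.
  by rewrite (Hf_fst (fun b => b.1)) // (Hf_fst (fun x => x)) // Hf_inj_full.
have HA2 : Hf PA (fun a => a.1.2) = l2.
  by rewrite (Hf_fst (fun b => b.2)) // (Hf_snd (fun x => x)) // Hf_inj_full.
have HA3 : Hf PA (fun a => a.2) = l3.
  by rewrite (Hf_snd (fun x => x)) // Hf_inj_full.
have HA12 : Hf PA (fun a => (a.1.1, a.1.2)) = l1 + l2.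
  rewrite (Hf_fst (fun b => (b.1, b.2))) // Hf_inj_full ?entropy_prod ?Hq1 ?Hq2 //.
  by move=> [a b] [c d] /= [-> ->].
have HA13 : Hf PA (fun a => (a.1.1, a.2)) = l1 + l3.
  rewrite (Hf_prod (fun b => b.1) (fun x => x)) // (Hf_fst (fun x => x)) //.
  by rewrite !Hf_inj_full ?Hq1 ?Hq3.
have HA23 : Hf PA (fun a => (a.1.2, a.2)) = l2 + l3.
  rewrite (Hf_prod (fun b => b.2) (fun x => x)) // (Hf_snd (fun x => x)) //.
  by rewrite !Hf_inj_full ?Hq2 ?Hq3.
have HA123 : entropy PA = l1 + l2 + l3.
  by rewrite !entropy_prod // Hq1 Hq2 Hq3.
have hinj : forall (X Y Z W : finType),
    injective (fun y : (X * Y) * (Z * W) => ((y.1.1, y.2.1), (y.1.2, y.2.2))).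
  by move=> X Y Z W [[a b] [c d]] [[a' b'] [c' d']] /= [-> -> -> ->].
have E1 : Hf p (fun x => x.1.1) = l1 + L.
  rewrite /p Hf_push (@Hf_ext _ _ _ P _ (fun s => (s.1.1.1, s.2.1))) //.
  by rewrite (Hf_prod (fun a => a.1.1) (fun u => u.1)) // HA1 HU1.
have E2 : Hf p (fun x => x.1.2) = l2 + L.
  rewrite /p Hf_push (@Hf_ext _ _ _ P _ (fun s => (s.1.1.2, s.2.2))) //.
  by rewrite (Hf_prod (fun a => a.1.2) (fun u => u.2)) // HA2 HU2.
have E3 : Hf p (fun x => x.2) = l3 + L.
  rewrite /p Hf_push (@Hf_ext _ _ _ P _ (fun s => (s.1.2, s.2.1 + s.2.2))) //.
  by rewrite (Hf_prod (fun a => a.2) (fun u => u.1 + u.2)) // HA3 HU3.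
have E12 : Hf p (fun x => (x.1.1, x.1.2)) = l1 + l2 + (L + L).
  rewrite /p Hf_push (@Hf_inj _ _ _ _ P (fun s => ((s.1.1.1, s.1.1.2), (s.2.1, s.2.2)))
     (fun y => ((y.1.1, y.2.1), (y.1.2, y.2.2)))); last by []; last exact: hinj.
  by rewrite (Hf_prod (fun a => (a.1.1, a.1.2)) (fun u => (u.1, u.2))) // HA12 HU12.
have E13 : Hf p (fun x => (x.1.1, x.2)) = l1 + l3 + (L + L).
  rewrite /p Hf_push (@Hf_inj _ _ _ _ P (fun s => ((s.1.1.1, s.1.2), (s.2.1, s.2.1 + s.2.2)))
     (fun y => ((y.1.1, y.2.1), (y.1.2, y.2.2)))); last by []; last exact: hinj.
  by rewrite (Hf_prod (fun a => (a.1.1, a.2)) (fun u => (u.1, u.1 + u.2))) // HA13 HU13.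
have E23 : Hf p (fun x => (x.1.2, x.2)) = l2 + l3 + (L + L).
  rewrite /p Hf_push (@Hf_inj _ _ _ _ P (fun s => ((s.1.1.2, s.1.2), (s.2.2, s.2.1 + s.2.2)))
     (fun y => ((y.1.1, y.2.1), (y.1.2, y.2.2)))); last by []; last exact: hinj.
  by rewrite (Hf_prod (fun a => (a.1.2, a.2)) (fun u => (u.2, u.1 + u.2))) // HA23 HU23.
have E123 : Hf p (fun x => x) = l1 + l2 + l3 + (L + L).
  rewrite /p Hf_push Hf_inj_full; first by rewrite entropy_prod // HA123 entropy_prod // HU.
  move=> [[[a1 a2] a3] [u w]] [[[b1 b2] b3] [u' w']] /=.
  by case=> -> -> -> -> -> _.
apply/rowP => i; rewrite !mxE /=.
rewrite E1 E2 E3 E12 E13 E23 E123.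
by case: i => [[|[|[|[|[|[|[|i]]]]]]] hi] //=; ring.
Qed.
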